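(* Assume the setting of the context. Then there is $\epsilon_0>0$ such that for every $\epsilon\in(0,\epsilon_0)$, every $\sigma\in\Sigma$ and every $x\in[0,\infty)$: if $Q^\epsilon_\sigma\cdot x\geq 0$, then $Q^\epsilon_\sigma\cdot x\geq x$.
   Context: Let $(\Sigma,\mathbf{p})$ be a probability space. For each $\sigma\in\Sigma$ and $\epsilon\in[-1,1]$ let real numbers $a_\sigma,b_\sigma$ and $\alpha^\epsilon_\sigma,\beta^\epsilon_\sigma,\gamma^\epsilon_\sigma,\delta^\epsilon_\sigma$ be given, and write $A^\epsilon_\sigma=\begin{pmatrix}\alpha^\epsilon_\sigma&\beta^\epsilon_\sigma\\ \gamma^\epsilon_\sigma&\delta^\epsilon_\sigma\end{pmatrix}$. Assume that for all $\sigma$: $a_\sigma-|b_\sigma|\ge C_1$ and $\|A^\epsilon_\sigma\|\le C_3$ for $|\epsilon|\le1$, with constants $C_1,C_3\in(0,\infty)$. For $x\in\mathbb{R}\cup\{\infty\}$ define the Möbius action $$Q^\epsilon_\sigma\cdot x=\frac{(1+\epsilon^2\alpha^\epsilon_\sigma)x+(a_\sigma-b_\sigma-\epsilon\beta^\epsilon_\sigma)\epsilon}{1+\epsilon^2\delta^\epsilon_\sigma-(a_\sigma+b_\sigma+\epsilon\gamma^\epsilon_\sigma)\epsilon x},$$ i.e. the action of the matrix $\begin{pmatrix}1+\epsilon^2\alpha&(a-b-\epsilon\beta)\epsilon\\-(a+b+\epsilon\gamma)\epsilon&1+\epsilon^2\delta\end{pmatrix}$ on $\mathbb{R}\cup\{\infty\}$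 (with the usual conventions at $\infty$). The energy parameter $\epsilon$ is taken positive. *)

(* Defs.v *)
From Stdlib Require Import Reals.
Open Scope R_scope.

(* Operator (spectral) norm of the 2x2 real matrix [[a, b], [c, d]]:
   sqrt of the largest eigenvalue of A^T A, i.e.
   sqrt((S + sqrt(S^2 - 4 det^2)) / 2) with S = a^2+b^2+c^2+d^2. *)
Definition opnorm2 (a b c d : R) : R :=
  let S := a*a + b*b + c*c + d*d in
  let det := a*d - b*c in
  sqrt ((S + sqrt (S*S - 4*(det*det))) / 2).

(* Entries of the matrix
   [[1 + eps^2 al, (a - b - eps be) eps], [-(a + b + eps ga) eps, 1 + eps^2 de]]
   whose Moebius action on R u {oo} is Q^eps_sigma. For a finite x, the image is
   Qnum / Qden if Qden <> 0, and the point at infinity if Qden = 0. *)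
Definition Qnum (eps a b al be : R) (x : R) : R :=
  (1 + eps^2 * al) * x + (a - b - eps * be) * eps.
Definition Qden (eps a b ga de : R) (x : R) : R :=
  1 + eps^2 * de - (a + b + eps * ga) * eps * x.

(* Main.v *)
Require Import Defs.
From Stdlib Require Import Reals Lra Psatz.
Open Scope R_scope.

Lemma entry_bounds (al be ga de C3 : R) :
  opnorm2 al be ga de <= C3 ->
  al*al + be*be + ga*ga + de*de <= 2 * (C3*C3).
Proof.
  unfold opnorm2. intro H.
  set (S := al*al + be*be + ga*ga + de*de).
  set (T := (S + sqrt (S*S - 4*((al*de-be*ga)*(al*de-be*ga))))/2).
  fold S T in H.
  assert (HS : 0 <= S) by (unfold S; nra).
  assert (Hq : 0 <= sqrt (S*S - 4*((al*de-be*ga)*(al*de-be*ga)))) by apply sqrt_pos.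
  assert (HT : S/2 <= T) by (unfold T; lra).
  assert (HT0 : 0 <= T) by lra.
  assert (Hs : 0 <= sqrt T) by apply sqrt_pos.
  assert (E : sqrt T * sqrt T = T) by (apply sqrt_sqrt; lra).
  nra.
Qed.

Lemma sq_bound (t M : R) : 0 <= M -> t*t <= M -> -(1+M) <= t <= 1+M.
Proof. intros. split; nra. Qed.

Theorem lemma1 (Sigma : Type) (a b : Sigma -> R)
  (alpha beta gamma delta : R -> Sigma -> R) (C1 C3 : R) :
  0 < C1 -> 0 < C3 ->
  (forall s : Sigma, a s - Rabs (b s) >= C1) ->
  (forall (eps : R) (s : Sigma), Rabs eps <= 1 ->
     opnorm2 (alpha eps s) (beta eps s) (gamma eps s) (delta eps s) <= C3) ->
  exists eps0 : R, 0 < eps0 /\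
    forall (eps : R) (s : Sigma) (x : R),
      0 < eps < eps0 -> 0 <= x ->
      Qden eps (a s) (b s) (gamma eps s) (delta eps s) x <> 0 ->
      let y := Qnum eps (a s) (b s) (alpha eps s) (beta eps s) x
               / Qden eps (a s) (b s) (gamma eps s) (delta eps s) x in
      0 <= y -> x <= y.
Proof.
  intros HC1 HC3 Hab Hop.
  set (L := 1 + 2*(C3*C3)).
  assert (HL : 1 <= L) by (unfold L; nra).
  exists (Rmin 1 (Rmin (C1/(4*L)) (1/(2*L)))).
  split.
  { apply Rmin_glb_lt; [lra|]. apply Rmin_glb_lt; apply Rdiv_lt_0_compat; lra. }
  intros e s x He Hx HD y Hy.
  assert (He1 : e < 1) by (eapply Rlt_le_trans; [apply He| apply Rmin_l]).
  assert (He2 : e < C1/(4*L)) by (eapply Rlt_le_trans; [apply He|];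
     eapply Rle_trans; [apply Rmin_r| apply Rmin_l]).
  assert (He3 : e < 1/(2*L)) by (eapply Rlt_le_trans; [apply He|];
     eapply Rle_trans; [apply Rmin_r| apply Rmin_r]).
  assert (HeL : e*L <= C1/4).
  { apply Rlt_le in He2. apply (Rmult_le_compat_r L) in He2; [|lra].
    replace (C1/(4*L)*L) with (C1/4) in He2 by (field; lra). exact He2. }
  assert (HeL2 : e*L <= 1/2).
  { apply Rlt_le in He3. apply (Rmult_le_compat_r L) in He3; [|lra].
    replace (1/(2*L)*L) with (1/2) in He3 by (field; lra). exact He3. }
  assert (Hb := Hop e s ltac:(rewrite Rabs_right; lra)).
  apply entry_bounds in Hb.
  set (al := alpha e s) in *. set (be := beta e s) in *.
  set (ga := gamma e s) in *. set (de := delta e s) in *.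
  assert (M0 : 0 <= 2*(C3*C3)) by nra.
  assert (Bal := sq_bound al _ M0 ltac:(nra)).
  assert (Bbe := sq_bound be _ M0 ltac:(nra)).
  assert (Bga := sq_bound ga _ M0 ltac:(nra)).
  assert (Bde := sq_bound de _ M0 ltac:(nra)).
  fold L in Bal, Bbe, Bga, Bde.
  assert (Hab' := Hab s).
  assert (Hbb : -(Rabs (b s)) <= b s <= Rabs (b s)).
  { split; [apply Ropp_le_cancel; rewrite Ropp_involutive, <- Rabs_Ropp; apply RRle_abs|apply RRle_abs]. }
  assert (A1 : a s - b s - e*be >= C1/2).
  { assert (e*be <= e*L) by nra. lra. }
  assert (A2 : a s + b s + e*ga >= C1/2).
  { assert (-(e*L) <= e*ga) by nra. lra. }
  assert (A3 : 0 < 1 + e^2*al).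
  { assert (-(e*L) <= e*al) by nra. simpl. nra. }
  unfold y, Qnum, Qden in *.
  set (N := (1 + e ^ 2 * al) * x + (a s - b s - e * be) * e) in *.
  set (D := 1 + e ^ 2 * de - (a s + b s + e * ga) * e * x) in *.
  assert (HN : 0 < N) by (unfold N; nra).
  destruct (Rlt_or_le 0 D) as [HDp|HDn].
  - apply Rmult_le_reg_r with D; [lra|].
    unfold Rdiv. rewrite Rmult_assoc, Rinv_l, Rmult_1_r by lra.
    assert (Hin : 0 <= e*(al-de)*x + (a s - b s - e*be) + (a s + b s + e*ga)*(x*x)).
    { assert (H1 : 0 <= e*(al-de) + 2*(e*L)) by nra.
      assert (H2 : 0 <= (e*(al-de) + 2*(e*L))*x) by (apply Rmult_le_pos; lra).
      assert (2*(e*L)*x <= C1/2*x) by nra.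
      assert (H3 : 0 <= C1*((x-1)*(x-1))) by (apply Rmult_le_pos; [lra | apply Rle_0_sqr]).
      assert (C1/2*(1+x*x) >= C1*x) by nra.
      nra. }
    assert (N - x*D = e*(e*(al-de)*x + (a s - b s - e*be) + (a s + b s + e*ga)*(x*x)))
      by (unfold N, D; ring).
    nra.
  - exfalso. assert (D < 0) by lra.
    assert (N/D < 0). { unfold Rdiv. assert (/D < 0) by (apply Rinv_lt_0_compat; lra). nra. }
    lra.
Qed.
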